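(* Let $q$ be an odd prime power, $d$ a positive integer, $\varphi_d$ the coloring defined below, and $t\ge 2$ an integer. No affine subspace of $\mathbb{F}_q^d$ of dimension $t-2$ contains a $t$-falling star of $(\mathbb{F}_q^* )^d$ under $\varphi_d$. Consequently, $\mathrm{af}(S) \ge \mathrm{FS}(S) - 1$ for every nonempty finite subset $S \subseteq (\mathbb{F}_q^* )^d$.
   Context: $\mathbb{F}_q^*$ is the set of nonzero elements of $\mathbb{F}_q$, endowed with an arbitrary fixed linear order; $(\mathbb{F}_q^* )^d$ is ordered lexicographically with respect to it. Let $C_d = \mathrm{DOT} \sqcup \mathrm{ZERO}\sqcup\mathrm{UP}\sqcup\mathrm{DOWN}$, where $\mathrm{DOT} = \mathbb{F}_q^*$ and ZERO, UP, DOWN are three disjoint copies of $\{1,\dots,d\}\times \mathbb{F}_q$. For distinct $x<y$ in $(\mathbb{F}_q^* )^d$, let $i$ be the first coordinate where $x$ and $y$ differ, and $x\cdot y$ the standard dot product; $\varphi_d(x,y)=\varphi_d(y,x)$ is $(i,x_i+y_i)$ in ZERO if $x\cdot y=0$; $(i,x_i+y_i)$ in UP if $x\cdot y\ne 0$ and $x\cdot y=x\cdot x$; $(i,x_i+y_i)$ in DOWN if $x\cdot y\notin\{0,x\cdot x\}$ and $x\cdot y=y\cdot y$; and $x\cdot y\in\mathrm{DOT}$ otherwise. Distinct vectors $s_1,\dots,s_t$ form a $t$-falling star under $\varphi_d$ if there are colors $\alpha_2,\dots,\alpha_t$ with $\varphi_d(s_i,s_j)=\alpha_i$ for all $1\le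 j<i\le t$ (i.e., after some labeling, each vector's edges to all earlier vectors share one color). $\mathrm{FS}(S)$ is the maximum $t$ such that $S$ contains a $t$-falling star; $\mathrm{af}(S)$ is the dimension of the affine hull of $S$. *)

(* Defs.v *)
From HB Require Import structures.
From mathcomp Require Import all_boot all_order all_algebra.
Set Implicit Arguments. Unset Strict Implicit. Unset Printing Implicit Defensive.
Import GRing.Theory.
Local Open Scope ring_scope.

Section Coloring.
Variables (F : finFieldType) (d : nat).
(* A linear order on F^* is given by an injective ranking rk : F -> nat;
   a <_F b  iff  rk a < rk b. *)
Variable rk : F -> nat.

Definition vec := 'rV[F]_d.

Definition nzvec : pred vec := fun x => [forall i : 'I_d, x 0 i != 0].

Definition dotv (x y : vec) : F := \sum_(i < d) x 0 i * y 0 i.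

Definition firstdiff (x y : vec) : option 'I_d :=
  [pick i : 'I_d | (x 0 i != y 0 i) &&
                   [forall j : 'I_d, (j < i)%N ==> (x ord0 j == y ord0 j)]].

Definition lexlt (x y : vec) : bool :=
  if firstdiff x y is Some i then (rk (x ord0 i) < rk (y ord0 i))%N else false.

(* C_d = DOT + ZERO + UP + DOWN, with ZERO, UP, DOWN copies of {1..d} x F
   (index i : 'I_d stands for i+1). DOT values are only ever nonzero. *)
Definition color : finType :=
  ((F + ('I_d * F)) + (('I_d * F) + ('I_d * F)))%type.
Definition cDOT (a : F) : color := inl (inl a).
Definition cZERO (i : 'I_d) (a : F) : color := inl (inr (i, a)).
Definition cUP (i : 'I_d) (a : F) : color := inr (inl (i, a)).
Definition cDOWN (i : 'I_d) (a : F) : color := inr (inr (i, a)).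

(* the color of {x, y} assuming x < y (lexicographically) *)
Definition phi0 (x y : vec) : color :=
  match firstdiff x y with
  | Some i =>
      let s := x 0 i + y 0 i in
      if dotv x y == 0 then cZERO i s
      else if dotv x y == dotv x x then cUP i s
      else if dotv x y == dotv y y then cDOWN i s
      else cDOT (dotv x y)
  | None => cDOT 0 (* x = y: irrelevant *)
  end.

Definition phi (x y : vec) : color :=
  if lexlt x y then phi0 x y else phi0 y x.

Definition falling_star (P : pred vec) (t : nat) (s : 'I_t -> vec) : Prop :=
  [/\ injective s, (forall i, P (s i)) &
      exists alpha : 'I_t -> color,
        forall i j : 'I_t, (j < i)%N -> phi (s i) (s j) = alpha i].

Definition has_falling_star (S : {set vec}) (t : nat) : bool :=
  [exists s : {ffun 'I_t -> vec},
     [&& injectiveb s, [forall i, s i \in S] &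
      [exists alpha : {ffun 'I_t -> color},
        [forall i : 'I_t, forall j : 'I_t,
           (j < i)%N ==> (phi (s i) (s j) == alpha i)]]]].

(* FS(S): the maximal t such that S contains a t-falling star
   (a t-falling star has t distinct vertices, so t <= #|S|) *)
Definition FS (S : {set vec}) : nat :=
  \max_(t < #|S|.+1 | has_falling_star S t) t.

(* af(S): dimension of the affine hull of S (for S nonempty) *)
Definition af (S : {set vec}) : nat :=
  let s0 := odflt 0 [pick s in S] in
  \dim <<[seq s - s0 | s <- enum S]>>%VS.

End Coloring.

(* Main.v *)
Require Import Defs.
From HB Require Import structures.
From mathcomp Require Import all_boot all_order all_algebra.
Set Implicit Arguments. Unset Strict Implicit. Unset Printing Implicit Defensive.
Import GRing.Theory.
Local Open Scope ring_scope.

Section Aux.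
Variables (F : finFieldType) (d : nat) (rk : F -> nat).
Local Notation vec := 'rV[F]_d.

Lemma firstdiffN (x y : vec) : firstdiff x y = None -> x = y.
Proof.
rewrite /firstdiff; case: pickP => // H _.
suff K : forall n (i : 'I_d), (i < n)%N -> x 0 i = y 0 i.
  by apply/rowP => i; apply: (K i.+1).
elim=> [//|n IH] i; rewrite ltnS leq_eqVlt => /orP[/eqP Ei|]; last exact: IH.
have := H i; case: eqP => // _ /=; case/forallP => j; apply/implyP => lji.
by rewrite !(ord1 0) IH // -Ei.
Qed.

Lemma firstdiffS (x y : vec) i : firstdiff x y = Some i -> x 0 i != y 0 i.
Proof.
rewrite /firstdiff; case: pickP => // j /andP[H _] [<-]; exact: H.
Qed.

Lemma dotvC (x y : vec) : dotv x y = dotv y x.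
Proof. by apply: eq_bigr => i _; rewrite mulrC. Qed.

Definition colP (x y : vec) (c : color F d) : Prop :=
  match c with
  | inl (inl b) => dotv x y = b /\ dotv x y != dotv x x /\ dotv x y != dotv y y
  | inl (inr (i, a)) => x 0 i != y 0 i /\ x 0 i + y 0 i = a
  | inr (inl (i, a)) => x 0 i != y 0 i /\ x 0 i + y 0 i = a
  | inr (inr (i, a)) => x 0 i != y 0 i /\ x 0 i + y 0 i = a
  end.

Lemma colP_sym x y c : colP x y c -> colP y x c.
Proof.
case: c => [[b|[i a]]|[[i a]|[i a]]] /=;
  rewrite ?(dotvC y x) ?(eq_sym (y 0 i)) ?(addrC (y 0 i)); tauto.
Qed.

Lemma phi0_colP x y : x != y -> colP x y (phi0 x y).
Proof.
move=> nxy; rewrite /phi0; case E: firstdiff => [i|]; last first.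
  by rewrite (firstdiffN E) eqxx in nxy.
have D := firstdiffS E.
case: ifP => _; first by [].
case: ifP => H1; first by [].
case: ifP => H2; first by [].
by rewrite /= H1 H2.
Qed.

Lemma phi_colP x y : x != y -> colP x y (phi rk x y).
Proof.
move=> nxy; rewrite /phi; case: ifP => _; first exact: phi0_colP.
by apply: colP_sym; apply: phi0_colP; rewrite eq_sym.
Qed.

Lemma span_L (L : vec -> F) (LD : forall u v, L (u + v) = L u + L v)
  (LZ : forall k v, L (k *: v) = k * L v) (X : seq vec) :
  (forall x, x \in X -> L x = 0) -> forall v, v \in <<X>>%VS -> L v = 0.
Proof.
have L0 : L 0 = 0 by rewrite -(scale0r 0) LZ mul0r.
elim: X => [|x X IH] HX v.
  by rewrite span_nil memv0 => /eqP ->.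
rewrite span_cons => /memv_addP[u /vlineP[k ->] [w Hw ->]].
rewrite LD LZ HX ?mem_head // IH ?mulr0 ?add0r // => y Hy.
by apply: HX; rewrite in_cons Hy orbT.
Qed.


Fixpoint Xs (f : nat -> vec) k : seq vec :=
  if k is k'.+1 then (f k - f 0%N) :: Xs f k' else [::].

Lemma size_Xs f k : size (Xs f k) = k.
Proof. by elim: k => //= k ->. Qed.

Lemma mem_Xs f k x : x \in Xs f k -> exists2 j, (0 < j <= k)%N & x = f j - f 0%N.
Proof.
elim: k => [//|k IH] /=; rewrite in_cons => /orP[/eqP ->|/IH[j /andP[j0 jk] ->]].
  by exists k.+1; rewrite ?leqnn.
by exists j => //; rewrite j0 (leq_trans jk).
Qed.

Lemma notin_span (L : vec -> F) (LD : forall u v, L (u + v) = L u + L v)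
  (LZ : forall k v, L (k *: v) = k * L v) (f : nat -> vec) k :
  (forall j, (j <= k)%N -> L (f j) = L (f 0%N)) -> L (f k.+1) != L (f 0%N) ->
  f k.+1 - f 0%N \notin <<Xs f k>>%VS.
Proof.
have LB : forall u v, L (u - v) = L u - L v.
  by move=> u v; rewrite LD -scaleN1r LZ mulN1r.
move=> Hj Hne; apply/negP => Hm.
have H0 : forall x, x \in Xs f k -> L x = 0.
  by move=> x /mem_Xs[j /andP[_ jk] ->]; rewrite LB Hj // subrr.
move/eqP: Hne; apply; apply/eqP; rewrite -subr_eq0 -LB.
apply/eqP; exact: (span_L LD LZ H0 Hm).
Qed.

Lemma core t (s : 'I_t.+1 -> vec) (alpha : 'I_t.+1 -> color F d) :
  injective s -> (forall i j : 'I_t.+1, (j < i)%N -> phi rk (s i) (s j) = alpha i) ->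
  forall (V : {vspace vec}) a, (forall i, s i - a \in V) -> (t <= \dim V)%N.
Proof.
move=> inj H V a HV.
pose f n := s (inord n).
have Hfree : forall k, (k <= t)%N -> free (Xs f k).
{ elim=> [|k IH] kt; first by rewrite /free span_nil dimv0.
  rewrite /= free_cons IH ?(ltnW kt) // andbT.
  have Hc : forall j, (j <= k)%N -> colP (f k.+1) (f j) (alpha (inord k.+1)).
    move=> j jk.
    have Hlt : (@inord t j < @inord t k.+1)%N.
      rewrite inordK; last by rewrite ltnS (leq_trans jk) // ltnW.
      by rewrite inordK.
    rewrite -(H _ _ Hlt) /f; apply: phi_colP.
    apply/eqP => /inj /(congr1 (@nat_of_ord _)).
    have jt : (j < t.+1)%N by rewrite ltnS (leq_trans jk) // ltnW.
    have kt1 : (k.+1 < t.+1)%N by [].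
    rewrite (inordK jt) (inordK kt1) => E; move: jk; by rewrite -E ltnn.
  move: Hc; case: (alpha (inord k.+1)) => [[b|[i c]]|[[i c]|[i c]]] Hc.
  - apply: (@notin_span (dotv (f k.+1))).
    + by move=> u v; rewrite /dotv -big_split; apply: eq_bigr => l _; rewrite mxE mulrDr.
    + by move=> r v; rewrite /dotv mulr_sumr; apply: eq_bigr => l _; rewrite mxE mulrCA.
    + by move=> j jk; case: (Hc j jk) => -> _; case: (Hc 0%N (leq0n _)) => ->.
    + by case: (Hc 0%N (leq0n _)) => -> [+ _]; rewrite eq_sym.
  all: apply: (@notin_span (fun v => v 0 i)).
  all: try by move=> u v; rewrite mxE.
  all: try by move=> r v; rewrite mxE.
  all: try by case: (Hc 0%N (leq0n _)).
  all: move=> j jk; case: (Hc j jk) => _ Ej; case: (Hc 0%N (leq0n _)) => _ E0.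
  all: by apply: (addrI (f k.+1 0 i)); rewrite Ej E0. }
have fr := Hfree t (leqnn t).
rewrite -{1}(size_Xs f t) -(eqP fr).
apply: dimvS. apply/span_subvP => x /mem_Xs[j _ ->].
have -> : f j - f 0%N = (f j - a) - (f 0%N - a) by rewrite opprB addrA subrK.
by apply: memvB; apply: HV.
Qed.

End Aux.

Theorem lemma3p9 (F : finFieldType) (d : nat) (rk : F -> nat) :
  odd #|F| -> (0 < d)%N -> injective rk ->
  (forall (t : nat), (2 <= t)%N ->
     forall (V : {vspace 'rV[F]_d}) (a : 'rV[F]_d),
       \dim V = (t - 2)%N ->
       ~ exists s : 'I_t -> 'rV[F]_d,
           falling_star rk (nzvec (d:=d)) s /\ (forall i, s i - a \in V)) /\
  (forall S : {set 'rV[F]_d},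
     S != set0 -> {subset S <= nzvec (d:=d)} ->
     (FS rk S - 1 <= af S)%N).
Proof.
move=> _ _ _; split.
  case=> [//|t] t2 V a dV [s [[inj _ [alpha Ha]] HV]].
  have := core inj Ha HV; rewrite dV; case: t t2 {s inj Ha HV alpha dV} => //= t _.
  by rewrite !subSS subn0 ltnn.
move=> S _ _.
suff : (FS rk S <= (af S).+1)%N by move=> h; rewrite leq_subLR add1n.
apply/bigmax_leqP => -[t /= _] /existsP[s /and3P[/injectiveP inj /forallP inS /existsP[alpha /forallP Ha]]].
case: t s alpha inj inS Ha => [//|t] s alpha inj inS Ha.
rewrite ltnS; apply: (@core F d rk t s alpha inj).
  move=> i j ji; apply/eqP; exact: (implyP (forallP (Ha i) j) ji).
move=> i; apply: memv_span; apply: map_f; rewrite mem_enum; exact: inS.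
Qed.
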